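(* Let $A=(a_{ij})\in\mathcal{B}^{m,n}$ and let $k$ be a field. Let $k[A]=k[x_{ij} : a_{ij}=1]$, let $A[x]$ be the matrix over $k[A]$ with $A[x]_{ij}=x_{ij}$ if $a_{ij}=1$ and $0$ otherwise, and let $I_2(A[x])$ be the ideal of $k[A]$ generated by the $2\times2$ minors of $A[x]$. Let $\Delta_A$ be the simplicial complex on the vertex set $\{a_{ij} : a_{ij}=1\}$ whose faces are the isolated sets of $A$, and let $I_{\Delta_A}\subseteq k[A]$ be its Stanley–Reisner ideal, i.e. the ideal generated by the monomials $\prod_{a_{ij}\in S}x_{ij}$ for all subsets $S$ of the vertices with $S\notin\Delta_A$. Then \[ I_{\Delta_A}=\big(x_{ij}x_{k\ell} : (i,j)\neq(k,\ell),\ a_{ij}=a_{k\ell}=1,\ x_{ij}x_{k\ell}\notin I_2(A[x])\big). \]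
   Context: $\mathcal{B}^{m,n}$ denotes $m\times n$ matrices with entries in the Boolean semiring $\{0,1\}$ with $\vee$ (or), $\wedge$ (and). A pair of entries $\{a_{ij},a_{k\ell}\}$ is isolated if $a_{ij}=a_{k\ell}=1$ and $a_{i\ell}\wedge a_{kj}=0$. A subset $T$ of the entries of $A$ equal to $1$ is an isolated set if it has size one or every pair of its elements is isolated (the empty set is also a face of $\Delta_A$). *)

(* Defs.v *)
From HB Require Import structures.
From mathcomp Require Import all_boot all_order all_algebra.
From mathcomp Require Import mpoly.
Set Implicit Arguments. Unset Strict Implicit. Unset Printing Implicit Defensive.
Import GRing.Theory.
Local Open Scope ring_scope.

(* Boolean matrices B^{m,n} are 'M[bool]_(m,n); entry a_ij = 1 iff A i j = true. *)

Definition Vert (m n : nat) (A : 'M[bool]_(m, n)) : finType :=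
  {p : 'I_m * 'I_n | A p.1 p.2}.

(* k[A] = k[x_ij : a_ij = 1]: variables indexed by the vertices (via enum_rank). *)
Definition kA (k : fieldType) (m n : nat) (A : 'M[bool]_(m, n)) :=
  {mpoly k[#|Vert A|]}.

Definition xv (k : fieldType) (m n : nat) (A : 'M[bool]_(m, n)) (v : Vert A)
  : kA k A := 'X_(enum_rank v).

Definition Ax (k : fieldType) (m n : nat) (A : 'M[bool]_(m, n))
  : 'M[kA k A]_(m, n) :=
  \matrix_(i, j) match (insub (i, j) : option (Vert A)) with
                 | Some v => xv k v
                 | None => 0
                 end.

Definition in_ideal (R : comRingType) (G : R -> Prop) (p : R) : Prop :=
  exists s : seq (R * R), (forall c, c \in s -> G c.2) /\
                          p = \sum_(c <- s) c.1 * c.2.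

Definition minors2 (k : fieldType) (m n : nat) (A : 'M[bool]_(m, n))
  (p : kA k A) : Prop :=
  exists (i1 i2 : 'I_m) (j1 j2 : 'I_n), (i1 < i2)%N /\ (j1 < j2)%N /\
    p = Ax k A i1 j1 * Ax k A i2 j2 - Ax k A i1 j2 * Ax k A i2 j1.

Definition isolated_pair (m n : nat) (A : 'M[bool]_(m, n)) (v w : Vert A) : bool :=
  let: (i, j) := val v in let: (k, l) := val w in ~~ (A i l && A k j).

(* isolated set: size one, or every pair of (distinct) elements isolated;
   the empty set is included as well *)
Definition isolated_set (m n : nat) (A : 'M[bool]_(m, n)) (T : {set Vert A}) : bool :=
  (#|T| <= 1)%N || [forall v in T, forall w in T, (v != w) ==> isolated_pair v w].

Definition SR_gens (k : fieldType) (m n : nat) (A : 'M[bool]_(m, n))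
  (p : kA k A) : Prop :=
  exists S : {set Vert A}, ~~ isolated_set S /\ p = \prod_(v in S) xv k v.

Definition quad_gens (k : fieldType) (m n : nat) (A : 'M[bool]_(m, n))
  (p : kA k A) : Prop :=
  exists v w : Vert A, v != w /\ ~ in_ideal (@minors2 k m n A) (xv k v * xv k w)
                       /\ p = xv k v * xv k w.

(* Main.v *)
Require Import Defs.
From HB Require Import structures.
From mathcomp Require Import all_boot all_order all_algebra.
From mathcomp Require Import mpoly.
Local Open Scope ring_scope.
Import GRing.Theory.

Section Aux.
Variables (k : fieldType) (m n : nat) (A : 'M[bool]_(m, n)).

Lemma in_ideal_mono (G H : kA k A -> Prop) p :
  (forall g, G g -> exists r h, H h /\ g = r * h) ->
  in_ideal G p -> in_ideal H p.
Proof.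
move=> GH [s [Hs ->]]; elim: s Hs => [|c s IH] Hs.
  by exists [::]; split => //; rewrite !big_nil.
rewrite big_cons.
have [t [Ht ->]] : in_ideal H (\sum_(c <- s) c.1 * c.2).
  by apply: IH => d ds; apply: Hs; rewrite inE ds orbT.
have [r [h [Hh ->]]] := GH _ (Hs c (mem_head _ _)).
exists ((c.1 * r, h) :: t); split.
  by move=> d; rewrite inE => /orP [/eqP -> //|]; apply: Ht.
by rewrite big_cons /= mulrA.
Qed.

Lemma AxE (v : Vert A) : Ax k A (val v).1 (val v).2 = xv k v.
Proof. by rewrite mxE -surjective_pairing valK. Qed.

Lemma Ax0 i j : ~~ A i j -> Ax k A i j = 0.
Proof. by move=> H; rewrite mxE insubF //; apply/negbTE. Qed.

Lemma Ax_eval (P : 'I_m * 'I_n -> bool) i j :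
  meval (fun r => (P (val (enum_val r)))%:R) (Ax k A i j)
  = (A i j && P (i, j))%:R.
Proof.
rewrite mxE; case: insubP => [u /= Hu Hval|/negbTE ->]; last by rewrite meval0.
by rewrite /xv mevalXU enum_rankK Hval Hu.
Qed.

Lemma not_iso_notin (v w : Vert A) :
  ~~ isolated_pair v w -> ~ in_ideal (@minors2 k m n A) (xv k v * xv k w).
Proof.
case: v w => [[i j] Hv] [[i' j'] Hw]; rewrite /isolated_pair /= negbK => /andP [H1 H2].
set Pr := fun a : 'I_m => (a == i) || (a == i').
set Pc := fun b : 'I_n => (b == j) || (b == j').
set P := fun p : 'I_m * 'I_n => Pr p.1 && Pc p.2.
have HA : forall a b, Pr a -> Pc b -> A a b.
  by rewrite /Pr /Pc => a b /orP [] /eqP -> /orP [] /eqP ->.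
have HAP : forall a b, A a b && P (a, b) = Pr a && Pc b.
  move=> a b; rewrite /P /=; case: (boolP (Pr a)) => ra; case: (boolP (Pc b)) => rb;
    by rewrite ?andbF ?andbT /= ?HA.
move=> [s [Hs Heq]].
have := congr1 (meval (fun r => (P (val (enum_val r)))%:R)) Heq.
rewrite rmorph_sum big1_seq /=; last first.
  move=> c cs; have [i1 [i2 [j1 [j2 [_ [_ ->]]]]]] := Hs c cs.
  rewrite rmorphM rmorphB !rmorphM /= !Ax_eval !HAP -!natrM -!mulnb.
  by case: (Pr i1); case: (Pr i2); case: (Pc j1); case: (Pc j2); rewrite subrr mulr0.
rewrite mevalM /xv !mevalXU !enum_rankK /P /Pr /Pc /= !eqxx /= ?orbT.
by rewrite mulr1 => /eqP; rewrite oner_eq0.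
Qed.

Lemma iso_in (v w : Vert A) :
  v != w -> isolated_pair v w -> in_ideal (@minors2 k m n A) (xv k v * xv k w).
Proof.
rewrite -(AxE v) -(AxE w).
case: v w => [[i j] Hv] [[i' j'] Hw]; rewrite /isolated_pair /= => neq Hn.
have Hil : Ax k A i j' * Ax k A i' j = 0.
  case: (boolP (A i j')) => a1; last by rewrite Ax0 ?mul0r.
  by move: Hn; rewrite a1 /= => Hb; rewrite (Ax0 _ _ Hb) mulr0.
have ii : i != i'.
  apply/eqP => E; move: Hn; rewrite -E Hv; subst i'; by rewrite Hw.
have jj : j != j'.
  apply/eqP => E; move: Hn; rewrite E Hw; subst j'; by rewrite Hv.
have key : forall (a1 a2 : 'I_m) (b1 b2 : 'I_n), (a1 < a2)%N -> (b1 < b2)%N ->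
   minors2 (Ax k A a1 b1 * Ax k A a2 b2 - Ax k A a1 b2 * Ax k A a2 b1).
  by move=> a1 a2 b1 b2 h1 h2; exists a1, a2, b1, b2.
have Hil' : Ax k A i' j * Ax k A i j' = 0 by rewrite mulrC.
case: (ltngtP i i') => [lt1|lt1|/val_inj E]; last by rewrite E eqxx in ii.
- case: (ltngtP j j') => [lt2|lt2|/val_inj E]; last by rewrite E eqxx in jj.
  + exists [:: (1, Ax k A i j * Ax k A i' j' - Ax k A i j' * Ax k A i' j)].
    split; first by move=> c; rewrite inE => /eqP ->; apply: key.
    by rewrite big_seq1 /= mul1r Hil subr0.
  + exists [:: (-1, Ax k A i j' * Ax k A i' j - Ax k A i j * Ax k A i' j')].
    split; first by move=> c; rewrite inE => /eqP ->; apply: key.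
    by rewrite big_seq1 /= Hil sub0r mulN1r opprK.
- case: (ltngtP j j') => [lt2|lt2|/val_inj E]; last by rewrite E eqxx in jj.
  + exists [:: (-1, Ax k A i' j * Ax k A i j' - Ax k A i' j' * Ax k A i j)].
    split; first by move=> c; rewrite inE => /eqP ->; apply: key.
    by rewrite big_seq1 /= Hil' sub0r mulN1r opprK mulrC.
  + exists [:: (1, Ax k A i' j' * Ax k A i j - Ax k A i' j * Ax k A i j')].
    split; first by move=> c; rewrite inE => /eqP ->; apply: key.
    by rewrite big_seq1 /= mul1r Hil' subr0 mulrC.
Qed.

End Aux.

Theorem corollary4p15 (k : fieldType) (m n : nat) (A : 'M[bool]_(m, n))
  (p : kA k A) :
  in_ideal (@SR_gens k m n A) p <-> in_ideal (@quad_gens k m n A) p.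
Proof.
split; apply: in_ideal_mono => g.
- move=> [S [HS ->]].
  move: HS; rewrite /isolated_set negb_or => /andP [_].
  rewrite negb_forall => /existsP [v]; rewrite negb_imply => /andP [vS].
  rewrite negb_forall => /existsP [w]; rewrite negb_imply => /andP [wS].
  rewrite negb_imply => /andP [vw Hn].
  exists (\prod_(u in S :\ v :\ w) xv k u), (xv k v * xv k w); split.
    by exists v, w; split => //; split => //; apply: not_iso_notin.
  rewrite (bigD1 v) //= (bigD1 w) /=; last by rewrite wS eq_sym vw.
  rewrite mulrA mulrC; congr (_ * _).
  apply: eq_bigl => u; rewrite !inE.
  by case: (u \in S); case: (u != v); case: (u != w).
- move=> [v [w [vw [Hn ->]]]].
  exists 1, (xv k v * xv k w); split; last by rewrite mul1r.
  exists [set v; w]; split.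
    rewrite /isolated_set negb_or cards2 vw /=.
    rewrite negb_forall; apply/existsP; exists v; rewrite !inE eqxx /=.
    rewrite negb_forall; apply/existsP; exists w; rewrite !inE eqxx orbT /= vw /=.
    by apply/negP => Hi; apply: Hn; apply: iso_in.
  by rewrite big_setU1 ?inE //= big_set1.
Qed.
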